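(* For all $r\ge3$ and all $N$, $$\operatorname{Im}\Big(\phi^{(r-1)}_{N,r}\circ\phi^{(r-2)}_{N,r}|_{\mathbf W_{N,r}}\circ\cdots\circ\phi^{(2)}_{N,r}|_{\mathbf W_{N,r}}\Big)\subseteq\ker\phi^{(r)}_{N,r}\cap\operatorname{Im}\Big(\phi^{(r-1)}_{N,r}\circ\cdots\circ\phi^{(2)}_{N,r}\Big),$$ where the left-hand composition is applied to $\mathbf W_{N,r}$ (for $r=3$ it is $\phi^{(2)}_{N,3}$ applied to $\mathbf W_{N,3}$), and the right-hand composition is applied to $\mathbf V_{N,r}$.
   Context: For integers $N,r\ge1$ let $S_{N,r}=\{(n_1,\dots,n_r)\in\mathbb Z^r:\ n_1+\dots+n_r=N,\ \text{each } n_i\ge3 \text{ odd}\}$; when used as an index set it is ordered lexicographically decreasingly. $\mathbf V_{N,r}$ is the $\mathbb Q$-span of the monomials $x_1^{n_1-1}\cdots x_r^{n_r-1}$ with $(n_1,\dots,n_r)\in S_{N,r}$. $\mathsf{Vect}_{N,r}=\mathbb Q^{S_{N,r}}$ (row vectors), and $\pi:\mathbf V_{N,r}\to\mathsf{Vect}_{N,r}$ is the isomorphism sending $\sum a_{n_1,\dots,n_r}x_1^{n_1-1}\cdots x_r^{n_r-1}$ to $(a_{n_1,\dots,n_r})_{(n_1,\dots,n_r)\in S_{N,r}}$. For $r\ge2$, $\mathbf W_{N,r}=\{P\in\mathbf V_{N,r}: P(x_1,\dots,x_r)=P(x_2-x_1,x_2,x_3,\dots,x_r)-P(x_2-x_1,x_1,x_3,\dots,x_r)\}$.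 Ihara action: for $f\in\mathbb Q[t]$ and a polynomial $g$ in $r-1$ variables, $(f\mathbin{\underline\circ}g)(x_1,\dots,x_r)=f(x_1)g(x_2,\dots,x_r)+\sum_{i=1}^{r-1}\big(f(x_{i+1}-x_i)g(x_1,\dots,\widehat{x_{i+1}},\dots,x_r)-(-1)^{\deg f}f(x_i-x_{i+1})g(x_1,\dots,\widehat{x_i},\dots,x_r)\big)$ (hats denote omitted variables). For positive integers $m_i,n_i$, $e\binom{m_1,\dots,m_r}{n_1,\dots,n_r}$ is the coefficient of $x_1^{n_1-1}\cdots x_r^{n_r-1}$ in $t^{m_1-1}\mathbin{\underline\circ}\,(y_1^{m_2-1}\cdots y_{r-1}^{m_r-1})$. $E_{N,r}$ is the $S_{N,r}\times S_{N,r}$ matrix with $(m,n)$-entry $e\binom{m}{n}$; $F_{N,r}=E_{N,r}-\mathrm{id}$. The restricted totally even part of a polynomial is the sum of its monomials in which every variable $x_1,\dots,x_r$ occurs with even exponent $\ge2$. For $1\le j\le r$, $\phi^{(j)}_{N,r}:\mathbf V_{N,r}\to\mathbf V_{N,r}$ is the linear map sending $Q$ to the restricted totally even part of $Q(x_1,\dots,x_r)+\sum_{i=r-j+1}^{r-1}\big(Q(x_1,\dots,x_{r-j},x_{i+1}-x_i,x_{r-j+1},\dots,\widehat{x_{i+1}},\dots,x_r)-Q(x_1,\dots,x_{r-j},x_{i+1}-x_i,x_{r-j+1},\dots,\widehat{x_i},\dots,x_r)\big)$ (in each term the argument list after $x_{i+1}-x_i$ is $x_{r-j+1},\dots,x_r$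 with one variable omitted). For $2\le j\le r-2$, $\phi^{(j)}_{N,r}$ maps $\mathbf W_{N,r}$ into itself. It is known (Tasaka) that for $r\ge2$ and $P\in\mathbf W_{N,r}$, $\pi(P)F_{N,r}$ lies in the left kernel $\{v: vE_{N,r}=0\}$. *)

(* Defs.v *)
From mathcomp Require Import all_boot all_order all_algebra.
Set Implicit Arguments. Unset Strict Implicit. Unset Printing Implicit Defensive.
Import GRing.Theory Num.Theory.
Local Open Scope ring_scope.

Definition mpoly := seq (rat * seq nat).

Definition mcoef (p : mpoly) (m : seq nat) : rat :=
  \sum_(t <- p | t.2 == m) t.1.

Definition meq (p q : mpoly) : Prop := forall m, mcoef p m = mcoef q m.

Definition mzero : mpoly := [::].
Definition madd (p q : mpoly) : mpoly := p ++ q.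
Definition mscale (a : rat) (p : mpoly) : mpoly := [seq (a * t.1, t.2) | t <- p].
Definition mopp (p : mpoly) : mpoly := mscale (-1) p.
Definition msub (p q : mpoly) : mpoly := madd p (mopp q).
Definition mmul (p q : mpoly) : mpoly :=
  [seq (a.1 * b.1, [seq (e.1 + e.2)%N | e <- zip a.2 b.2]) | a <- p, b <- q].
Definition mone (r : nat) : mpoly := [:: (1, nseq r 0%N)].
Definition mpow (r : nat) (p : mpoly) (n : nat) : mpoly := iter n (mmul p) (mone r).

(* the variable x_k (1-based index k) in r variables *)
Definition mX (r k : nat) : mpoly :=
  [:: (1, [seq nat_of_bool (m == k.-1)%N | m <- iota 0 r])].

Definition mmonom (r : nat) (s : seq mpoly) (e : seq nat) : mpoly :=
  foldr mmul (mone r) [seq mpow r (nth mzero s k) (nth 0%N e k) | k <- iota 0 r].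
Definition msubst (r : nat) (p : mpoly) (s : seq mpoly) : mpoly :=
  flatten [seq mscale t.1 (mmonom r s t.2) | t <- p].

(* monomials x_1^{n_1-1}...x_r^{n_r-1} with (n_1..n_r) in S_{N,r}:
   exponent lists of length r, all entries even >= 2, sum (n_i) = N *)
Definition inS (N r : nat) (m : seq nat) : bool :=
  [&& size m == r, all (fun e => ~~ odd e && (2 <= e)%N) m & (sumn m + r == N)%N].

Definition inV (N r : nat) (p : mpoly) : Prop :=
  forall m, mcoef p m != 0 -> inS N r m.

(* P belongs to W_{N,r}:
   P(x1,..,xr) = P(x2-x1,x2,x3,..,xr) - P(x2-x1,x1,x3,..,xr) *)
Definition inW (N r : nat) (p : mpoly) : Prop :=
  inV N r p /\
  meq p (msub (msubst r p (msub (mX r 2) (mX r 1) :: mX r 2 :: [seq mX r k | k <- iota 3 (r - 2)]))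
              (msubst r p (msub (mX r 2) (mX r 1) :: mX r 1 :: [seq mX r k | k <- iota 3 (r - 2)]))).

Definition rte (r : nat) (p : mpoly) : mpoly :=
  [seq t <- p | (size t.2 == r) && all (fun e => ~~ odd e && (2 <= e)%N) t.2].

(* argument list (x_1,..,x_{r-j}, x_{i+1}-x_i, x_{r-j+1},..,^x_o,..,x_r) *)
Definition phi_args (r j i o : nat) : seq mpoly :=
  [seq mX r k | k <- iota 1 (r - j)] ++
  msub (mX r i.+1) (mX r i) ::
  [seq mX r k | k <- iota (r - j + 1) j & k != o].

Definition phi (r j : nat) (Q : mpoly) : mpoly :=
  rte r (madd Q
    (flatten [seq msub (msubst r Q (phi_args r j i i.+1))
                       (msubst r Q (phi_args r j i i))
             | i <- iota (r - j + 1) (j - 1)])).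

(* phiComp r k Q = phi^{(k+1)} (phi^{(k)} ( ... phi^{(2)} Q)) ;
   the composition phi^{(r-1)} o ... o phi^{(2)} is phiComp r (r-2) *)
Fixpoint phiComp (r k : nat) (Q : mpoly) : mpoly :=
  match k with
  | 0 => Q
  | k'.+1 => phi r k'.+1.+1 (phiComp r k' Q)
  end.

Definition inImW (N r : nat) (Q : mpoly) : Prop :=
  exists P, inW N r P /\ meq Q (phiComp r (r - 2) P).

Definition inImV (N r : nat) (Q : mpoly) : Prop :=
  exists P, inV N r P /\ meq Q (phiComp r (r - 2) P).

Definition inKer (N r j : nat) (Q : mpoly) : Prop :=
  inV N r Q /\ meq (phi r j Q) mzero.

(* Main.v *)
Require Import Defs.
From mathcomp Require Import all_boot all_order all_algebra.
From mathcomp Require Import zify ring lra.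
Set Implicit Arguments. Unset Strict Implicit. Unset Printing Implicit Defensive.
Import GRing.Theory Num.Theory.

Module Part1.
Local Open Scope ring_scope.

Lemma mcoef_nil m : mcoef [::] m = 0.
Proof. by rewrite /mcoef big_nil. Qed.

Lemma mcoef_cons t p m : mcoef (t :: p) m = (if t.2 == m then t.1 else 0) + mcoef p m.
Proof. by rewrite /mcoef big_cons; case: ifP => _; rewrite ?add0r. Qed.

Lemma mcoef_cat p q m : mcoef (p ++ q) m = mcoef p m + mcoef q m.
Proof. by rewrite /mcoef big_cat. Qed.

Lemma mcoef_scale a p m : mcoef (mscale a p) m = a * mcoef p m.
Proof.
rewrite /mcoef /mscale big_map mulr_sumr; apply: eq_bigr => t _ //.
Qed.

Lemma mcoef_flatten ps m : mcoef (flatten ps) m = \sum_(p <- ps) mcoef p m.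
Proof.
elim: ps => [|p ps IH]; first by rewrite big_nil mcoef_nil.
by rewrite /= mcoef_cat big_cons IH.
Qed.

Lemma mcoef_sub p q m : mcoef (msub p q) m = mcoef p m - mcoef q m.
Proof. by rewrite /msub /madd /mopp mcoef_cat mcoef_scale mulN1r. Qed.

Lemma sum_coef (F : seq nat -> rat) (p : mpoly) (M : seq (seq nat)) :
  uniq M -> {subset map snd p <= M} ->
  \sum_(t <- p) t.1 * F t.2 = \sum_(m <- M) mcoef p m * F m.
Proof.
move=> uM; elim: p => [|t p IH] sub.
  by rewrite big_nil big1 // => m _; rewrite mcoef_nil mul0r.
rewrite big_cons IH; last by move=> x hx; apply: sub; rewrite /= inE hx orbT.
have tM : t.2 \in M by apply: sub; rewrite /= inE eqxx.
under [RHS]eq_bigr => m _ do rewrite mcoef_cons mulrDl.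
rewrite big_split /=; congr (_ + _).
rewrite (bigD1_seq t.2) //= eqxx big1 ?addr0 // => m /negPf.
by rewrite eq_sym => ->; rewrite mul0r.
Qed.

Lemma sum_coef_meq (F : seq nat -> rat) (p q : mpoly) :
  meq p q -> \sum_(t <- p) t.1 * F t.2 = \sum_(t <- q) t.1 * F t.2.
Proof.
move=> h.
rewrite (@sum_coef F p (undup (map snd (p ++ q)))) ?undup_uniq //; last first.
  by move=> x hx; rewrite mem_undup map_cat mem_cat hx.
rewrite (@sum_coef F q (undup (map snd (p ++ q)))) ?undup_uniq //; last first.
  by move=> x hx; rewrite mem_undup map_cat mem_cat hx orbT.
by apply: eq_bigr => m _; rewrite h.
Qed.

Lemma mcoef_msubst r p s m :
  mcoef (msubst r p s) m = \sum_(t <- p) t.1 * mcoef (mmonom r s t.2) m.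
Proof.
by rewrite /msubst mcoef_flatten big_map; apply: eq_bigr => t _; rewrite mcoef_scale.
Qed.

Lemma meq_msubst r p q s : meq p q -> meq (msubst r p s) (msubst r q s).
Proof.
move=> h m; rewrite !mcoef_msubst.
exact: (sum_coef_meq (fun e => mcoef (mmonom r s e) m) h).
Qed.

Lemma meq_refl p : meq p p. Proof. by []. Qed.
Lemma meq_sym p q : meq p q -> meq q p. Proof. by move=> h m; rewrite h. Qed.
Lemma meq_trans p q s : meq p q -> meq q s -> meq p s.
Proof. by move=> h1 h2 m; rewrite h1 h2. Qed.
Lemma meq_cat p p' q q' : meq p p' -> meq q q' -> meq (p ++ q) (p' ++ q').
Proof. by move=> h1 h2 m; rewrite !mcoef_cat h1 h2. Qed.
Lemma meq_sub p p' q q' : meq p p' -> meq q q' -> meq (msub p q) (msub p' q').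
Proof. by move=> h1 h2 m; rewrite !mcoef_sub h1 h2. Qed.
Lemma meq_flatten (ps qs : seq mpoly) : size ps = size qs ->
  (forall i, (i < size ps)%N -> meq (nth mzero ps i) (nth mzero qs i)) ->
  meq (flatten ps) (flatten qs).
Proof.
elim: ps qs => [|p ps IH] [|q qs] //= [hs] h.
apply: meq_cat; first exact: (h 0%N).
by apply: IH => // i hi; apply: (h i.+1).
Qed.

End Part1.
Import Part1.

Module Part2.
Local Open Scope ring_scope.

Definition mon (r : nat) (e : seq nat) (w : seq rat) : rat :=
  \prod_(k < r) (nth 0 w k) ^+ (nth 0%N e k).
Definition ev (r : nat) (p : mpoly) (w : seq rat) : rat :=
  \sum_(t <- p) t.1 * mon r t.2 w.
Definition sized (r : nat) (p : mpoly) := all (fun t => size t.2 == r) p.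

Lemma ev_cat r p q w : ev r (p ++ q) w = ev r p w + ev r q w.
Proof. by rewrite /ev big_cat. Qed.
Lemma ev_nil r w : ev r [::] w = 0.
Proof. by rewrite /ev big_nil. Qed.
Lemma ev_scale r a p w : ev r (mscale a p) w = a * ev r p w.
Proof. by rewrite /ev big_map mulr_sumr; apply: eq_bigr => t _; rewrite mulrA. Qed.
Lemma ev_sub r p q w : ev r (msub p q) w = ev r p w - ev r q w.
Proof. by rewrite /msub /madd /mopp ev_cat ev_scale mulN1r. Qed.
Lemma ev_flatten r ps w : ev r (flatten ps) w = \sum_(p <- ps) ev r p w.
Proof.
elim: ps => [|p ps IH]; first by rewrite big_nil ev_nil.
by rewrite /= ev_cat big_cons IH.
Qed.
Lemma ev_meq r p q w : meq p q -> ev r p w = ev r q w.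
Proof. exact: (sum_coef_meq (fun e => mon r e w)). Qed.

Lemma sized_cat r p q : sized r (p ++ q) = sized r p && sized r q.
Proof. by rewrite /sized all_cat. Qed.
Lemma sized_scale r a p : sized r (mscale a p) = sized r p.
Proof. by rewrite /sized all_map. Qed.
Lemma sized_sub r p q : sized r p -> sized r q -> sized r (msub p q).
Proof. by move=> hp hq; rewrite /msub /madd /mopp sized_cat sized_scale hp hq. Qed.
Lemma sized_mone r : sized r (mone r).
Proof. by rewrite /sized /= size_nseq eqxx. Qed.
Lemma sized_mX r k : sized r (mX r k).
Proof. by rewrite /sized /= size_map size_iota eqxx. Qed.
Lemma sized_mmul r p q : sized r p -> sized r q -> sized r (mmul p q).
Proof.
move=> /allP hp /allP hq; apply/allP => t /allpairsP [[a b] [ha hb ->]] /=.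
by rewrite size_map size_zip (eqP (hp _ ha)) (eqP (hq _ hb)) minnn.
Qed.
Lemma sized_mpow r p n : sized r p -> sized r (mpow r p n).
Proof. by move=> hp; elim: n => [|n IH] /=; [exact: sized_mone|exact: sized_mmul]. Qed.

Lemma mon_add r ea eb w : size ea = r -> size eb = r ->
  mon r [seq (e.1 + e.2)%N | e <- zip ea eb] w = mon r ea w * mon r eb w.
Proof.
move=> ha hb; rewrite /mon -big_split /=; apply: eq_bigr => k _.
rewrite (nth_map (0%N, 0%N)); last by rewrite size_zip ha hb minnn.
by rewrite nth_zip ?ha ?hb //= exprD.
Qed.

Lemma ev_mmul r p q w : sized r p -> sized r q ->
  ev r (mmul p q) w = ev r p w * ev r q w.
Proof.
move=> /allP hp /allP hq; rewrite /ev /mmul big_allpairs_dep mulr_suml.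
apply: eq_big_seq => a ha; rewrite mulr_sumr; apply: eq_big_seq => b hb /=.
rewrite mon_add ?(eqP (hp _ ha)) ?(eqP (hq _ hb)) //.
by rewrite mulrACA.
Qed.

Lemma ev_mone r w : ev r (mone r) w = 1.
Proof.
rewrite /ev big_cons big_nil addr0 mul1r /mon /= big1 // => k _.
by rewrite nth_nseq; case: ifP.
Qed.

Lemma ev_mpow r p n w : sized r p -> ev r (mpow r p n) w = ev r p w ^+ n.
Proof.
move=> hp; elim: n => [|n IH] /=; first by rewrite ev_mone.
by rewrite ev_mmul ?IH ?exprS //; exact: sized_mpow.
Qed.

Lemma ev_mX r k w : (1 <= k <= r)%N -> ev r (mX r k) w = nth 0 w k.-1.
Proof.
case/andP => hk1 hkr.
rewrite /ev big_cons big_nil addr0 mul1r /mon /=.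
have hk : (k.-1 < r)%N by rewrite prednK.
rewrite (bigD1 (Ordinal hk)) //= big1 ?mulr1.
  by rewrite (nth_map 0%N) ?size_iota // nth_iota // add0n eqxx expr1.
move=> i /eqP hi; rewrite (nth_map 0%N) ?size_iota // nth_iota // add0n.
case: eqP => // he; exfalso; apply: hi; exact: val_inj.
Qed.

Lemma ev_foldr_mmul r (ps : seq mpoly) w : all (sized r) ps ->
  ev r (foldr mmul (mone r) ps) w = \prod_(p <- ps) ev r p w.
Proof.
elim: ps => [|p ps IH] /=; first by rewrite big_nil ev_mone.
case/andP => hp hps; rewrite big_cons ev_mmul ?IH //.
elim: ps hps {IH} => [|q qs IH2]; first by move=> _; exact: sized_mone.
by case/andP => hq hqs; apply: sized_mmul => //; apply: IH2.
Qed.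

Definition sizedS r (s : seq mpoly) := forall k, (k < r)%N -> sized r (nth mzero s k).

Lemma sized_mmonom r s e : sizedS r s -> sized r (mmonom r s e).
Proof.
move=> hs; rewrite /mmonom.
have : all (sized r) [seq mpow r (nth mzero s k) (nth 0%N e k) | k <- iota 0 r].
  apply/allP => p /mapP [k]; rewrite mem_iota add0n => /andP [_ hk] ->.
  exact/sized_mpow/hs.
elim: [seq _ | _ <- _] => [|q qs IH]; first by move=> _; exact: sized_mone.
by case/andP => hq hqs; apply: sized_mmul => //; apply: IH.
Qed.

Lemma ev_mmonom r s e w : sizedS r s ->
  ev r (mmonom r s e) w = \prod_(k < r) (ev r (nth mzero s k) w) ^+ (nth 0%N e k).
Proof.
move=> hs; rewrite /mmonom ev_foldr_mmul; last first.
  apply/allP => p /mapP [k]; rewrite mem_iota add0n => /andP [_ hk] ->.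
  exact/sized_mpow/hs.
rewrite big_map -(big_mkord xpredT (fun k => ev r (nth mzero s k) w ^+ nth 0%N e k)).
rewrite /index_iota subn0; apply: eq_big_seq => k; rewrite mem_iota add0n => /andP [_ hk].
by rewrite ev_mpow //; exact: hs.
Qed.

Lemma ev_msubst r p s w : sizedS r s ->
  ev r (msubst r p s) w = ev r p [seq ev r q w | q <- s].
Proof.
move=> hs; rewrite /msubst ev_flatten big_map /ev; apply: eq_bigr => t _.
rewrite -/(ev r _ w) ev_scale ev_mmonom //; congr (_ * _).
rewrite /mon; apply: eq_bigr => k _; congr (_ ^+ _).
case: (ltnP k (size s)) => hk; first by rewrite (nth_map mzero).
by rewrite !nth_default ?size_map // ev_nil.
Qed.

End Part2.
Import Part2.

Module Part3.
Local Open Scope ring_scope.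

Lemma poly_zero_coefs (D : nat) (c : nat -> rat) :
  (forall x : rat, \sum_(d < D) c d * x ^+ d = 0) -> forall d, (d < D)%N -> c d = 0.
Proof.
move=> h d hd.
have P0 : \poly_(i < D) c i = 0.
  apply: (@roots_geq_poly_eq0 _ _ [seq i%:R | i <- iota 0 D]).
  - by apply/allP => x /mapP [i _ ->]; rewrite /root horner_poly h.
  - by rewrite map_inj_uniq ?iota_uniq // => a b /eqP; rewrite eqr_nat => /eqP.
  - by rewrite size_map size_iota size_poly.
by have := coef_poly D c d; rewrite P0 coef0 hd => <-.
Qed.

Lemma mon_cons r e x w : mon r.+1 e (x :: w) = x ^+ (head 0%N e) * mon r (behead e) w.
Proof.
rewrite /mon big_ord_recl /=.
case: e => [|a e] /=.
  by rewrite expr0 !mul1r; apply: eq_bigr => k _; rewrite !nth_nil.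
by congr (_ * _)%R; apply: eq_bigr => k _; rewrite add0n.
Qed.

Definition slice (p : mpoly) (d : nat) : mpoly :=
  [seq (t.1, behead t.2) | t <- p & head 0%N t.2 == d].

Lemma slice_sized r p d : sized r.+1 p -> sized r (slice p d).
Proof.
move=> /allP h; apply/allP => t /mapP [u]; rewrite mem_filter => /andP [_ hu] -> /=.
by rewrite size_behead (eqP (h _ hu)).
Qed.

Lemma mcoef_slice r p d m : sized r.+1 p -> mcoef p (d :: m) = mcoef (slice p d) m.
Proof.
move=> /allP h; rewrite /mcoef /slice big_map big_filter_cond big_mkcond [RHS]big_mkcond /=.
apply: eq_big_seq => t ht; have := eqP (h _ ht); case: t ht => a [|b e] //= _ _.
Qed.

Lemma head_le_sumn (p : mpoly) t : t \in p -> (head 0%N t.2 <= sumn [seq head 0%N u.2 | u <- p])%N.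
Proof.
elim: p => [|u p IH] //=; rewrite inE => /orP [/eqP ->|ht]; first by rewrite leq_addr.
by apply: leq_trans (IH ht) _; rewrite leq_addl.
Qed.

Lemma ev_slices r p x w : sized r.+1 p ->
  ev r.+1 p (x :: w) =
  \sum_(d < (sumn [seq head 0%N t.2 | t <- p]).+1) x ^+ d * ev r (slice p d) w.
Proof.
move=> _; set D := (sumn _).+1.
have hD : forall t, t \in p -> (head 0%N t.2 < D)%N.
  by move=> t ht; rewrite /D ltnS head_le_sumn.
rewrite /ev.
under [RHS]eq_bigr => d _ do rewrite /slice big_map big_filter mulr_sumr.
rewrite (exchange_big_dep xpredT) //=.
apply: eq_big_seq => t ht; rewrite mon_cons.
rewrite (big_pred1 (Ordinal (hD t ht))) /=; first by rewrite mulrCA.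
by move=> d; rewrite /= eq_sym -val_eqE.
Qed.

Lemma ev_inj r p : sized r p -> (forall w, ev r p w = 0) -> meq p mzero.
Proof.
elim: r p => [|r IH] p hs h m.
  rewrite mcoef_nil.
  case: m => [|a m]; last first.
    rewrite /mcoef big_seq_cond big1 // => t /andP [ht /eqP e].
    by have := allP hs _ ht; rewrite e.
  rewrite -(h [::]) /ev /mcoef big_mkcond /=.
  apply: eq_big_seq => t ht; have := allP hs _ ht; case: t {ht} => a [|b e] //= _.
  by rewrite /mon big_ord0 mulr1.
rewrite mcoef_nil; case: m => [|d m].
  rewrite /mcoef big_seq_cond big1 // => t /andP [ht /eqP e].
  by have := allP hs _ ht; rewrite e.
rewrite (mcoef_slice _ _ hs).
case: (ltnP d (sumn [seq head 0%N t.2 | t <- p]).+1) => hd; last first.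
  rewrite /mcoef /slice big_map big_filter_cond big_seq_cond big1 // => t /andP [ht /andP [/eqP e _]].
  by move: hd; rewrite -e ltnNge head_le_sumn.
have := IH (slice p d) (slice_sized d hs) _ m; rewrite /mzero mcoef_nil; apply => w.
have := @poly_zero_coefs _ (fun d => ev r (slice p d) w) _ d hd; apply.
by move=> x; rewrite -[RHS](h (x :: w)) (ev_slices _ _ hs); apply: eq_bigr => i _; rewrite mulrC.
Qed.

End Part3.
Import Part3.

Module Part4.
Local Open Scope ring_scope.

Definition del (i : nat) (v : seq rat) := take i v ++ drop i.+1 v.
Definition Lg (p : nat) (v : seq rat) := nth 0 v p - (if p is 0 then 0 else nth 0 v p.-1).
Definition Rg (p : nat) (v : seq rat) := nth 0 v p.+1 - nth 0 v p.
Definition OpG (g : seq rat -> rat) (v : seq rat) : rat :=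
  \sum_(p < size v) (g (Lg p v :: del p v) -
                     (if (p.+1 < size v)%N then g (Rg p v :: del p v) else 0)).

Lemma size_del i v : (i < size v)%N -> size (del i v) = (size v).-1.
Proof. move=> h; rewrite /del size_cat size_take size_drop h; lia. Qed.

Lemma nth_del i v k : (i < size v)%N ->
  nth 0 (del i v) k = if (k < i)%N then nth 0 v k else nth 0 v k.+1.
Proof.
move=> h; rewrite /del nth_cat size_take h.
case: ifP => hk; first by rewrite nth_take.
rewrite nth_drop; congr nth; move/negbT: hk; lia.
Qed.

Lemma del_del p s w : (p < s)%N -> (s < size w)%N ->
  del s.-1 (del p w) = del p (del s w).
Proof.
move=> hps hs.
have hp : (p < size w)%N by lia.
have hs1 : (s.-1 < size (del p w))%N by rewrite size_del //; lia.
have hp2 : (p < size (del s w))%N by rewrite size_del //; lia.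
apply: (@eq_from_nth _ 0).
  by rewrite !size_del //; lia.
move=> k _.
rewrite (nth_del _ hs1) (nth_del _ hp2) !nth_del //.
case: (ltnP k p) => hkp.
  have -> : (k < s.-1)%N by lia.
  by have -> : (k < s)%N by lia.
case: (ltnP k s.-1) => hks.
  by have -> : (k.+1 < s)%N by lia.
have -> : (k.+1 < p)%N = false by lia.
by have -> : (k.+1 < s)%N = false by lia.
Qed.

Section Gaps.
Variables (p s : nat) (w : seq rat).
Hypotheses (hps : (p < s)%N) (hs : (s < size w)%N).

Lemma G2 : Lg s.-1 (del p w) = if s == p.+1 then Lg p w + Rg p w else Lg s w.
Proof.
have hp : (p < size w)%N by lia.
rewrite /Lg /Rg !nth_del //.
have -> : (s.-1 < p)%N = false by lia.
rewrite prednK; last by lia.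
case: eqP => [->|hne] /=.
  case: (p) => [|p'] /=; first ring.
  rewrite ltnSn; ring.
case: (s) hps hs hne => [|[|s']] //= *; first by lia.
by have -> : (s' < p)%N = false by lia.
Qed.

Lemma G3 : Rg s.-1 (del p w) = Rg s w.
Proof.
have hp : (p < size w)%N by lia.
rewrite /Rg !nth_del //.
have -> : (s.-1.+1 < p)%N = false by lia.
have -> : (s.-1 < p)%N = false by lia.
by rewrite prednK //; lia.
Qed.

Lemma G4 : Lg p (del s w) = Lg p w.
Proof.
rewrite /Lg !nth_del // hps; case: p hps => [|p'] //= h.
by have -> : (p' < s)%N by lia.
Qed.

Lemma G5 : Rg p (del s w) = if s == p.+1 then Rg p w + Rg s w else Rg p w.
Proof.
rewrite /Rg !nth_del // hps; case: eqP => [->|hne].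
  rewrite ltnn; ring.
by have -> : (p.+1 < s)%N by lia.
Qed.
End Gaps.

Lemma antisym_sum n (J : nat -> nat -> rat) :
  (forall p s, (p < n)%N -> (s < n)%N -> p != s -> J p s = - J s p) ->
  \sum_(p < n) \sum_(s < n | s != p) J p s = 0.
Proof.
move=> hJ.
have e2 : \sum_(p < n) \sum_(s < n | s != p) J s p =
          \sum_(p < n) \sum_(s < n | s != p) J p s.
  under eq_bigr => p _ do rewrite big_mkcond /=.
  rewrite exchange_big; apply: eq_bigr => s _; rewrite [RHS]big_mkcond.
  by apply: eq_bigr => p _; rewrite eq_sym.
have e1 : \sum_(p < n) \sum_(s < n | s != p) J p s =
          - \sum_(p < n) \sum_(s < n | s != p) J s p.
  rewrite -sumrN; apply: eq_bigr => p _; rewrite -sumrN; apply: eq_big => // s hs.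
  by rewrite hJ // eq_sym.
move: e1; rewrite e2; set S := \sum_(p < n) _ => h.
have : S *+ 2 = 0 by rewrite mulr2n {1}h addNr.
by move/eqP; rewrite mulrn_eq0 /= => /eqP.
Qed.

Section Main.
Variable f : seq rat -> rat.
Hypothesis fW : forall a b R, f (a :: b :: R) = f ((b - a) :: b :: R) - f ((b - a) :: a :: R).

Lemma fAS a c R : f (a :: c :: R) = - f (c :: a :: R).
Proof.
have h1 := fW a (a + c) R; have h2 := fW c (a + c) R.
have e1 : a + c - a = c by ring.
have e2 : a + c - c = a by ring.
rewrite e1 in h1; rewrite e2 in h2; lra.
Qed.

Lemma fW' u c R : f (u :: (c + u) :: R) = f (c :: (c + u) :: R) - f (c :: u :: R).
Proof. by have := fW u (c + u) R; rewrite addrK. Qed.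

Variable w : seq rat.

Definition Tm (x : rat) (p q : nat) :=
  f (x :: Lg q (del p w) :: del q (del p w)) -
  (if (q.+1 < (size w).-1)%N then f (x :: Rg q (del p w) :: del q (del p w)) else 0).
Definition Jm (p s : nat) :=
  Tm (Lg p w) p (unbump p s) -
  (if (p.+1 < size w)%N then Tm (Rg p w) p (unbump p s) else 0).

Lemma Jpair p s : (p < s)%N -> (s < size w)%N -> Jm p s + Jm s p = 0.
Proof.
move=> hps hs.
have u1 : unbump p s = s.-1 by rewrite /unbump hps subn1.
have u2 : unbump s p = p by rewrite /unbump ltnNge (ltnW hps) subn0.
rewrite /Jm /Tm u1 u2 (del_del hps hs) (G2 hps hs) (G3 hps hs) (G4 hps hs) (G5 hps hs).
have -> : (p.+1 < size w)%N by lia.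
set Z := del p (del s w).
have -> : (s.-1.+1 < (size w).-1)%N = (s.+1 < size w)%N by apply/idP/idP; lia.
case: eqP => [es|ne].
  subst s.
  have -> : (p.+1.+1 < size w)%N = (p.+1 < (size w).-1)%N by apply/idP/idP; lia.
  set a := Lg p w; set b := Rg p w; set B := Rg p.+1 w.
  have h1 := fW' b a Z; have h2 := fW' B b Z.
  have h3 := fAS a b Z; have h4 := fAS a B Z.
  rewrite /= in h1 h2 h3 h4 *.
  case: ifP => _; lra.
have -> : (p.+1 < (size w).-1)%N by lia.
set a := Lg p w; set b := Rg p w; set A := Lg s w; set B := Rg s w.
have h1 := fAS a A Z; have h2 := fAS a B Z; have h3 := fAS b A Z; have h4 := fAS b B Z.
case: ifP => _; lra.
Qed.

Lemma inner_sum x p : (p < size w)%N ->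
  OpG (fun u => f (x :: u)) (del p w) = \sum_(q < (size w).-1) Tm x p q.
Proof. by move=> hp; rewrite /OpG /Tm size_del. Qed.

Lemma DD0 : OpG (fun y => OpG (fun u => f (head 0 y :: u)) (behead y)) w = 0.
Proof.
rewrite {1}/OpG /=.
under eq_bigr => p _ do rewrite !inner_sum ?ltn_ord //.
have -> : \sum_(p < size w)
   (\sum_(q < (size w).-1) Tm (Lg p w) p q -
    (if (p.+1 < size w)%N then \sum_(q < (size w).-1) Tm (Rg p w) p q else 0)) =
  \sum_(p < size w) \sum_(s < size w | s != p) Jm p s.
  apply: eq_bigr => p _.
  have -> : (if (p.+1 < size w)%N then \sum_(q < (size w).-1) Tm (Rg p w) p q else 0)
     = \sum_(q < (size w).-1) (if (p.+1 < size w)%N then Tm (Rg p w) p q else 0).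
    by case: ifP => _ //; rewrite big1.
  rewrite -sumrB.
  have e1 := @bigD1_ord _ +%R 0 _ p xpredT (fun s => Jm p s) isT.
  have e2 : \sum_(s < size w) Jm p s = Jm p p + \sum_(s < size w | s != p) Jm p s.
    by rewrite (bigD1 p).
  have : \sum_(s < size w | s != p) Jm p s =
         \sum_(i < (size w).-1) Jm p (lift p i).
    by apply: (@addrI _ (Jm p p)); rewrite -e1 -e2.
  move=> ->; apply: eq_bigr => q _; rewrite /Jm /= bumpK //.
apply: antisym_sum => p s hp hs hne.
case: (ltngtP p s) => h.
- by apply/eqP; rewrite -addr_eq0 Jpair.
- by apply/eqP; rewrite -addr_eq0 addrC Jpair.
- by move/eqP: hne.
Qed.
End Main.

End Part4.
Import Part4.

Module Part5.
Local Open Scope ring_scope.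

Definition Dform (r j : nat) (Q : mpoly) : mpoly :=
  madd Q (flatten [seq msub (msubst r Q (phi_args r j i i.+1))
                       (msubst r Q (phi_args r j i i))
             | i <- iota (r - j + 1) (j - 1)]).

Lemma phiE r j Q : phi r j Q = rte r (Dform r j Q).
Proof. by []. Qed.

Lemma mapnth1 (w : seq rat) a len : (a + len <= size w)%N ->
  [seq nth 0 w k.-1 | k <- iota a.+1 len] = take len (drop a w).
Proof.
move=> h; rewrite -add1n iotaDl -map_comp.
rewrite -(map_nth_iota 0); last first.
  by rewrite leq_subRL //; apply: leq_trans h; apply: leq_addr.
by apply: eq_map => k.
Qed.

Lemma filter_iota_neq a n c : (a <= c < a + n)%N ->
  [seq k <- iota a n | k != c] = iota a (c - a) ++ iota c.+1 (a + n - c.+1).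
Proof.
move=> /andP [h1 h2].
have -> : n = ((c - a) + (a + n - c.+1).+1)%N by lia.
rewrite iotaD filter_cat; congr (_ ++ _).
  rewrite (@eq_in_filter _ _ predT) ?filter_predT // => k; rewrite mem_iota => hk.
  by apply/eqP => e; move: hk; rewrite e; lia.
have -> : (a + (c - a) = c)%N by lia.
rewrite /= eqxx /=.
have -> : (a + (c - a + (a + n - c.+1).+1) - c.+1 = a + n - c.+1)%N by lia.
rewrite (@eq_in_filter _ _ predT) ?filter_predT // => k; rewrite mem_iota => hk.
by apply/eqP => e; move: hk; rewrite e; lia.
Qed.

Lemma args_del (w : seq rat) m j o : (m + j = size w)%N -> (o < j)%N ->
  [seq nth 0 w k.-1 | k <- [seq k <- iota m.+1 j | k != m.+1 + o]] = del o (drop m w).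
Proof.
move=> hs ho.
rewrite filter_iota_neq; last by lia.
have -> : (m.+1 + o - m.+1 = o)%N by lia.
rewrite map_cat mapnth1; last by lia.
have -> : (m.+1 + o).+1 = (m + o.+1).+1 by lia.
rewrite mapnth1; last by lia.
have e : take (m.+1 + j - (m + o.+1).+1) (drop (m + o.+1) w) = drop (m + o.+1) w.
  by rewrite take_oversize // size_drop -hs; lia.
by rewrite e /del drop_drop (addnC o.+1 m).
Qed.

Lemma sizedS_args r j i o : sizedS r (phi_args r j i o).
Proof.
move=> k _; case: (ltnP k (size (phi_args r j i o))) => hk; last by rewrite nth_default.
have : nth mzero (phi_args r j i o) k \in phi_args r j i o by apply: mem_nth.
rewrite /phi_args mem_cat inE => /orP [/mapP [l _ ->]|/orP [/eqP ->|/mapP [l _ ->]]].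
- exact: sized_mX.
- by apply: sized_sub; apply: sized_mX.
- exact: sized_mX.
Qed.

Lemma ev_args r j i o w : (1 <= i)%N -> (i < r)%N -> (j <= r)%N ->
  [seq ev r q w | q <- phi_args r j i o] =
  [seq nth 0 w k.-1 | k <- iota 1 (r - j)] ++
  (nth 0 w i - nth 0 w i.-1) :: [seq nth 0 w k.-1 | k <- [seq k <- iota (r - j + 1) j | k != o]].
Proof.
move=> h1 h2 h3; rewrite /phi_args map_cat /= -map_comp.
rewrite ev_sub !ev_mX /=; try lia.
congr (_ ++ _ :: _).
  by apply/eq_in_map => k; rewrite mem_iota /= => hk; rewrite ev_mX //; lia.
rewrite -map_comp; apply/eq_in_map => k; rewrite mem_filter mem_iota => /andP [_ hk].
by rewrite /= ev_mX //; lia.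
Qed.

Lemma OpG_alt g v n : size v = n.+1 ->
  OpG g v = g v + \sum_(p < n) (g (Rg p v :: del p.+1 v) - g (Rg p v :: del p v)).
Proof.
move=> hs; rewrite /OpG hs sumrB big_ord_recl big_ord_recr /= ltnn subr0 -addrA.
congr (_ + _).
  case: v hs => [|x v] //= _; rewrite /Lg /del /= drop0.
  by congr g; congr (_ :: _); rewrite subr0.
rewrite -sumrB; apply: eq_bigr => p _.
by rewrite ltnS ltn_ord.
Qed.

Lemma sum_iota0 n (F : nat -> rat) : \sum_(i <- iota 0 n) F i = \sum_(i < n) F i.
Proof. by rewrite -(big_mkord xpredT) /index_iota subn0. Qed.

Lemma ev_Dform r j Q w : size w = r -> (1 <= j <= r)%N ->
  ev r (Dform r j Q) w = OpG (fun u => ev r Q (take (r - j) w ++ u)) (drop (r - j) w).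
Proof.
move=> hs /andP [hj1 hjr].
set m := (r - j)%N.
have hv : size (drop m w) = (j - 1).+1 by rewrite size_drop; lia.
rewrite (OpG_alt _ hv) cat_take_drop.
rewrite /Dform /madd ev_cat ev_flatten big_map; congr (_ + _).
have -> : (r - j + 1 = m.+1 + 0)%N by lia.
rewrite iotaDl big_map sum_iota0.
apply: eq_bigr => p _; rewrite ev_sub !ev_msubst ?sizedS_args //.
have hp := ltn_ord p.
have hmj : (m + j = size w)%N by rewrite hs /m; lia.
have e1 : [seq nth 0 w k.-1 | k <- iota 1 m] = take m w.
  by rewrite (mapnth1 (a := 0)) ?drop0 //; lia.
have e2 : nth 0 w (m.+1 + p) - nth 0 w (m.+1 + p).-1 = Rg p (drop m w).
  by rewrite /Rg !nth_drop; congr (nth 0 w _ - nth 0 w _); lia.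
have hr1 : (r - j + 1 = m.+1)%N by rewrite /m; lia.
rewrite !ev_args //; try lia.
rewrite e1 e2 hr1 -(addnS m.+1 p) !args_del //; try lia.
all: exact: sizedS_args.
Qed.

End Part5.
Import Part5.

Module Part6.
Local Open Scope ring_scope.

Lemma ev_nth_ext r p w w' : (forall k, (k < r)%N -> nth 0 w k = nth 0 w' k) ->
  ev r p w = ev r p w'.
Proof.
move=> h; rewrite /ev; apply: eq_bigr => t _; congr (_ * _).
by rewrite /mon; apply: eq_bigr => k _; rewrite h.
Qed.

Definition trunc r (w : seq rat) := mkseq (nth 0 w) r.
Lemma size_trunc r w : size (trunc r w) = r. Proof. by rewrite size_mkseq. Qed.
Lemma ev_trunc r p w : ev r p w = ev r p (trunc r w).
Proof. by apply: ev_nth_ext => k hk; rewrite nth_mkseq. Qed.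

Lemma OpG_ext g g' v : (forall u, size u = size v -> g u = g' u) -> OpG g v = OpG g' v.
Proof.
move=> h; rewrite /OpG; apply: eq_bigr => p _.
have hp := ltn_ord p.
by rewrite !h //= size_del //; lia.
Qed.

Lemma OpG_sub g1 g2 v : OpG (fun u => g1 u - g2 u) v = OpG g1 v - OpG g2 v.
Proof.
rewrite /OpG -sumrB; apply: eq_bigr => p _.
case: ifP => _; lra.
Qed.

Definition Wsem (f : seq rat -> rat) :=
  forall a b R, f (a :: b :: R) = f ((b - a) :: b :: R) - f ((b - a) :: a :: R).

Lemma sized_msubst r p s : sizedS r s -> sized r (msubst r p s).
Proof.
move=> hs; rewrite /msubst; elim: p => [|t p IH] //=.
by rewrite sized_cat sized_scale sized_mmonom.
Qed.

Lemma sized_Dform r j Q : sized r Q -> sized r (Dform r j Q).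
Proof.
move=> hQ; rewrite /Dform /madd sized_cat hQ /=.
elim: (iota _ _) => [|i l IH] //=.
rewrite sized_cat IH andbT; apply: sized_sub; apply: sized_msubst; exact: sizedS_args.
Qed.

Lemma Wsem_Dform r j X : (2 <= r - j)%N -> (1 <= j)%N -> Wsem (ev r X) -> Wsem (ev r (Dform r j X)).
Proof.
move=> h2 h1 hW a b R.
set R' := trunc (r - 2) R.
have E : forall x y, ev r (Dform r j X) (x :: y :: R) =
   OpG (fun u => ev r X (x :: y :: (take (r - j - 2) R' ++ u))) (drop (r - j - 2) R').
  move=> x y.
  rewrite (@ev_nth_ext r _ _ (x :: y :: R')); last first.
    by move=> [|[|k]] //= hk; rewrite nth_mkseq //; lia.
  set m := (r - j - 2)%N.
  have hm : (r - j = m.+2)%N by rewrite /m; lia.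
  rewrite ev_Dform /=; last by lia.
    by rewrite hm.
  by rewrite /R' size_trunc; lia.
rewrite !E -OpG_sub; apply: OpG_ext => u _; exact: hW.
Qed.

Lemma Wsem_ext f g : (forall w, f w = g w) -> Wsem f -> Wsem g.
Proof. by move=> h hW a b R; rewrite -!h. Qed.

Lemma sizedS_of_all r s : all (sized r) s -> sizedS r s.
Proof.
move=> /allP h k _; case: (ltnP k (size s)) => hk; last by rewrite nth_default.
by apply: h; apply: mem_nth.
Qed.

Lemma Wsem_of_inW N r P : (2 <= r)%N -> inW N r P -> Wsem (ev r P).
Proof.
move=> hr [_ hm] a b R.
have sS : forall c, sizedS r (msub (mX r 2) (mX r 1) :: mX r c :: [seq mX r k | k <- iota 3 (r - 2)]).
  move=> c; apply/sizedS_of_all/allP => q; rewrite !inE => /orP [/eqP ->|/orP [/eqP ->|/mapP [k _ ->]]].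
  - by apply: sized_sub; apply: sized_mX.
  - exact: sized_mX.
  - exact: sized_mX.
rewrite (ev_meq _ _ hm) ev_sub !ev_msubst //.
have hmap : forall k, (k < r - 2)%N ->
    nth 0 [seq ev r q (a :: b :: R) | q <- [seq mX r k0 | k0 <- iota 3 (r - 2)]] k = nth 0 R k.
  move=> k hk; rewrite -map_comp (nth_map 0%N) ?size_iota // nth_iota //= ev_mX; last by lia.
  by have -> : (3 + k).-1 = k.+2 by lia.
have h21 : ev r (msub (mX r 2) (mX r 1)) (a :: b :: R) = b - a.
  by rewrite ev_sub !ev_mX //; lia.
have h2 : ev r (mX r 2) (a :: b :: R) = b by rewrite ev_mX //; lia.
have h1 : ev r (mX r 1) (a :: b :: R) = a by rewrite ev_mX //; lia.
congr (_ - _); apply: ev_nth_ext => -[|[|k]] hk //=; rewrite hmap //; lia.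
Qed.

Lemma DD_zero r Z : (2 <= r)%N -> sized r Z -> Wsem (ev r Z) ->
  meq (Dform r r (Dform r (r - 1) Z)) mzero.
Proof.
move=> hr hZ hW; apply: ev_inj; first by do 2 apply: sized_Dform.
move=> w; rewrite ev_trunc ev_Dform ?size_trunc //; last by lia.
rewrite subnn take0 drop0 /=.
rewrite -(DD0 hW (trunc r w)).
apply: OpG_ext => u hu; rewrite size_trunc in hu.
rewrite ev_Dform //; last by lia.
have -> : (r - (r - 1) = 1)%N by lia.
case: u hu => [|x u] /= hu; first by lia.
by rewrite take0 drop0.
Qed.

End Part6.
Import Part6.

Module Part7.

Definition wt (r : nat) (c : nat -> nat) (e : seq nat) : nat := \sum_(k < r) c k * nth 0 e k.
Definition homw (r : nat) (c : nat -> nat) (v : nat) (p : mpoly) :=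
  all (fun t => (size t.2 == r) && (wt r c t.2 == v)) p.

Lemma homw_cat r c v p q : homw r c v (p ++ q) = homw r c v p && homw r c v q.
Proof. by rewrite /homw all_cat. Qed.
Lemma homw_scale r c v a p : homw r c v (mscale a p) = homw r c v p.
Proof. by rewrite /homw all_map. Qed.
Lemma homw_sub r c v p q : homw r c v p -> homw r c v q -> homw r c v (msub p q).
Proof. by move=> hp hq; rewrite /msub /madd /mopp homw_cat homw_scale hp hq. Qed.
Lemma homw_mone r c : homw r c 0 (mone r).
Proof.
rewrite /homw /= size_nseq eqxx /= andbT /wt; apply/eqP.
by apply: big1 => k _; rewrite nth_nseq if_same muln0.
Qed.
Lemma wt_add r c ea eb : size ea = r -> size eb = r ->
  wt r c [seq (e.1 + e.2)%N | e <- zip ea eb] = (wt r c ea + wt r c eb)%N.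
Proof.
move=> ha hb; rewrite /wt -big_split /=; apply: eq_bigr => k _.
rewrite (nth_map (0%N, 0%N)); last by rewrite size_zip ha hb minnn.
by rewrite nth_zip ?ha ?hb //= mulnDr.
Qed.
Lemma homw_mmul r c v1 v2 p q : homw r c v1 p -> homw r c v2 q -> homw r c (v1 + v2) (mmul p q).
Proof.
move=> /allP hp /allP hq; apply/allP => t /allpairsP [[a b] [ha hb ->]] /=.
have /andP [/eqP sa /eqP wa] := hp _ ha; have /andP [/eqP sb /eqP wb] := hq _ hb.
rewrite /= in sa wa sb wb.
by rewrite size_map size_zip sa sb minnn eqxx (wt_add _ sa sb) wa wb eqxx.
Qed.
Lemma homw_mpow r c v p n : homw r c v p -> homw r c (n * v) (mpow r p n).
Proof.
move=> hp; elim: n => [|n IH] /=; first by rewrite mul0n; apply: homw_mone.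
by rewrite mulSn; apply: homw_mmul.
Qed.

Lemma homw_mmonom r c s e (lam : nat -> nat) :
  (forall k, (k < r)%N -> homw r c (lam k) (nth mzero s k)) ->
  homw r c (\sum_(k < r) lam k * nth 0 e k) (mmonom r s e).
Proof.
move=> hs; rewrite /mmonom -(big_mkord xpredT (fun k => lam k * nth 0 e k)) /index_iota subn0.
have : forall k, k \in iota 0 r -> homw r c (lam k * nth 0 e k) (mpow r (nth mzero s k) (nth 0 e k)).
  move=> k; rewrite mem_iota add0n => /andP [_ hk].
  by rewrite mulnC; apply: homw_mpow; apply: hs.
elim: (iota 0 r) => [|k l IH] h /=; first by rewrite big_nil; apply: homw_mone.
rewrite big_cons; apply: homw_mmul; first by apply: h; rewrite inE eqxx.
by apply: IH => x hx; apply: h; rewrite inE hx orbT.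
Qed.

Lemma wt_mX r c v : (1 <= v <= r)%N ->
  wt r c [seq nat_of_bool (m == v.-1) | m <- iota 0 r] = c v.-1.
Proof.
move=> /andP [h1 h2]; rewrite /wt.
have hv : (v.-1 < r)%N by lia.
rewrite (bigD1 (Ordinal hv)) //= big1 ?addn0.
  by rewrite (nth_map 0%N) ?size_iota // nth_iota // add0n eqxx muln1.
move=> k /eqP hk; rewrite (nth_map 0%N) ?size_iota // nth_iota // add0n.
case: eqP => e; last by rewrite muln0.
by exfalso; apply: hk; apply: val_inj.
Qed.

Lemma homw_mX r c v : (1 <= v <= r)%N -> homw r c (c v.-1) (mX r v).
Proof.
by move=> h; rewrite /homw /= size_map size_iota eqxx /= wt_mX // eqxx.
Qed.

Lemma nth_args r j i o k : (j <= r)%N -> (r - j + 1 <= o <= r)%N -> (k < r)%N ->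
  nth mzero (phi_args r j i o) k =
  if (k < r - j)%N then mX r k.+1
  else if k == (r - j)%N then msub (mX r i.+1) (mX r i)
  else mX r (if (k < o)%N then k else k.+1).
Proof.
move=> hj ho hk; rewrite /phi_args nth_cat size_map size_iota.
case: ltnP => h1.
  by rewrite (nth_map 0%N) ?size_iota // nth_iota // add1n.
case: eqP => [->|hne]; first by rewrite subnn.
have -> : (k - (r - j) = (k - (r - j) - 1).+1)%N by lia.
rewrite /= filter_iota_neq; last by lia.
rewrite map_cat nth_cat size_map size_iota.
case: ltnP => h2.
  rewrite (nth_map 0%N) ?size_iota // nth_iota //.
  have -> : (k < o)%N by lia.
  by congr mX; lia.
rewrite (nth_map 0%N) ?size_iota; last by lia.
rewrite nth_iota; last by lia.
have -> : (k < o)%N = false by lia.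
by congr mX; lia.
Qed.

Definition lam r j o (c : nat -> nat) i k : nat :=
  if (k < r - j)%N then c k else if k == (r - j)%N then c i
  else c (if (k < o)%N then k.-1 else k).

Lemma homw_args r j i o c k : (j <= r)%N -> (r - j + 1 <= o <= r)%N -> (1 <= i)%N -> (i < r)%N ->
  c i.-1 = c i -> (k < r)%N ->
  homw r c (lam r j o c i k) (nth mzero (phi_args r j i o) k).
Proof.
move=> hj ho hi1 hir hc hk; rewrite nth_args // /lam.
case: ltnP => h1; first by apply: homw_mX; lia.
case: eqP => h2.
  apply: homw_sub; first by apply: (homw_mX c (v := i.+1)); lia.
  by rewrite -hc; apply: homw_mX; lia.
case: ltnP => h3.
  by have := homw_mX c (r := r) (v := k); rewrite /=; apply; lia.
by apply: (homw_mX c (v := k.+1)); lia.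
Qed.

Lemma homw_mmonom_args r j i o c e : (j <= r)%N -> (r - j + 1 <= o <= r)%N -> (1 <= i)%N -> (i < r)%N ->
  c i.-1 = c i ->
  homw r c (\sum_(k < r) lam r j o c i k * nth 0 e k) (mmonom r (phi_args r j i o) e).
Proof. by move=> *; apply: homw_mmonom => k hk; apply: homw_args. Qed.

Lemma wt_delta r u e : (u < r)%N -> wt r (fun k => nat_of_bool (k == u)) e = nth 0 e u.
Proof.
move=> hu; rewrite /wt (bigD1 (Ordinal hu)) //= eqxx mul1n big1 ?addn0 //.
move=> k /eqP hk; case: eqP => h; last by rewrite mul0n.
by exfalso; apply: hk; apply: val_inj.
Qed.

Lemma sum_delta r (f : nat -> nat) s e : (s < r)%N -> (forall k, (k < r)%N -> f k = nat_of_bool (k == s)) ->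
  \sum_(k < r) f k * nth 0 e k = nth 0 e s.
Proof.
move=> hs hf; rewrite (bigD1 (Ordinal hs)) //= hf // eqxx mul1n big1 ?addn0 //.
move=> k /eqP hk; rewrite hf //; case: eqP => h; last by rewrite mul0n.
by exfalso; apply: hk; apply: val_inj.
Qed.

End Part7.
Import Part7.

Module Part8.
Local Open Scope ring_scope.

Definition goodn (e : nat) : bool := ~~ odd e && (2 <= e)%N.
Definition GoodM r (m : seq nat) := (size m == r) && all goodn m.

Lemma mcoef_rte r p m : mcoef (rte r p) m = if GoodM r m then mcoef p m else 0.
Proof.
rewrite /mcoef /rte big_filter_cond; case: ifP => hg.
  apply: eq_bigl => t /=; case: (t.2 =P m) => [->|_]; rewrite ?andbT ?andbF //.
by rewrite big1 // => t /andP [h /eqP e]; move: hg; rewrite /GoodM -e h.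
Qed.

Lemma meq_rte r p q : meq p q -> meq (rte r p) (rte r q).
Proof. by move=> h m; rewrite !mcoef_rte h. Qed.

Definition Kd r j e m := mcoef (Dform r j [:: (1, e)]) m.

Lemma Kd_expand r j e m : Kd r j e m = (if e == m then 1 else 0) +
  \sum_(i <- iota (r - j + 1) (j - 1))
     (mcoef (mmonom r (phi_args r j i i.+1) e) m - mcoef (mmonom r (phi_args r j i i) e) m).
Proof.
rewrite /Kd /Dform /madd mcoef_cat mcoef_cons mcoef_nil addr0 mcoef_flatten big_map.
congr (_ + _); apply: eq_bigr => i _.
by rewrite mcoef_sub !mcoef_msubst !big_cons !big_nil /= !addr0 !mul1r.
Qed.

Lemma mcoef_Dform r j X m : mcoef (Dform r j X) m = \sum_(t <- X) t.1 * Kd r j t.2 m.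
Proof.
under [RHS]eq_bigr => t _ do rewrite Kd_expand mulrDr mulr_sumr.
rewrite big_split /= /Dform /madd mcoef_cat mcoef_flatten big_map; congr (_ + _).
  by rewrite /mcoef big_mkcond; apply: eq_bigr => t _; case: ifP; rewrite ?mulr1 ?mulr0.
rewrite exchange_big /=; apply: eq_bigr => i _.
rewrite mcoef_sub !mcoef_msubst -sumrB; apply: eq_bigr => t _.
by rewrite mulrBr.
Qed.

Lemma meq_Dform r j X Y : meq X Y -> meq (Dform r j X) (Dform r j Y).
Proof.
move=> h m; rewrite !mcoef_Dform.
exact: (sum_coef_meq (fun e => Kd r j e m) h).
Qed.

Lemma rte_Dform_rte r j X :
  (forall t, t \in X -> ~~ GoodM r t.2 -> forall m, GoodM r m -> Kd r j t.2 m = 0) ->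
  meq (rte r (Dform r j X)) (rte r (Dform r j (rte r X))).
Proof.
move=> h m; rewrite !mcoef_rte; case: ifP => hm //.
rewrite !mcoef_Dform /rte big_filter (bigID (fun t => GoodM r t.2)) /=.
rewrite [X in _ + X]big1_seq ?addr0 // => t /andP [hb ht].
by rewrite (h t ht hb m hm) mulr0.
Qed.

Lemma mcoef_hom_zero r c v p m : homw r c v p -> wt r c m != v -> mcoef p m = 0.
Proof.
move=> /allP hp hw; rewrite /mcoef big_seq_cond big1 // => t /andP [ht /eqP e].
by have /andP [_ /eqP hv] := hp t ht; move: hw; rewrite -e hv eqxx.
Qed.

End Part8.
Import Part8.

Module Part9.
Local Open Scope ring_scope.

Lemma sum_delta2 r (f : nat -> nat) s1 s2 e : (s1 < r)%N -> (s2 < r)%N -> s1 != s2 ->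
  (forall k, (k < r)%N -> f k = (nat_of_bool (k == s1) + nat_of_bool (k == s2))%N) ->
  (\sum_(k < r) f k * nth 0 e k = nth 0 e s1 + nth 0 e s2)%N.
Proof.
move=> h1 h2 hne hf.
under eq_bigr => k _ do rewrite hf // mulnDl.
rewrite big_split /=.
by rewrite (@sum_delta r (fun k => nat_of_bool (k == s1)) s1) // (@sum_delta r (fun k => nat_of_bool (k == s2)) s2).
Qed.

Lemma mmonom_args_eq r j i e : (j <= r)%N -> (r - j + 1 <= i)%N -> (i < r)%N -> nth 0 e i = 0%N ->
  mmonom r (phi_args r j i i.+1) e = mmonom r (phi_args r j i i) e.
Proof.
move=> hj hi1 hir he; rewrite /mmonom; congr foldr.
apply/eq_in_map => k; rewrite mem_iota add0n => /andP [_ hk].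
case: (k =P i) => [->|hki]; first by rewrite he.
rewrite !nth_args //; try lia.
by have -> : (k < i.+1)%N = (k < i)%N by lia.
Qed.

Lemma Dcore r j e m : (1 <= j <= r)%N -> size e = r ->
  (forall u, (u <= r - j)%N -> goodn (nth 0 e u)) -> ~~ all goodn e -> GoodM r m ->
  Kd r j e m = 0.
Proof.
move=> /andP [hj1 hjr] hse hfront hbad /andP [/eqP hsm hgm].
rewrite Kd_expand.
have -> : (e == m) = false.
  by apply/negbTE; apply: contraNneq hbad => ->.
rewrite add0r big1_seq // => i; rewrite mem_iota => /andP [_ /andP [hi1 hi2]].
have hir : (i < r)%N by lia.
apply/eqP; rewrite subr_eq0; apply/eqP.
move: hbad; rewrite -has_predC => /(has_nthP 0%N) [s hs hsb].
rewrite hse in hs.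
have hsj : (r - j < s)%N.
  rewrite ltnNge; apply/negP => h; move: hsb => /= /negP; apply; exact: hfront.
have mgood : forall u, (u < r)%N -> goodn (nth 0 m u).
  by move=> u hu; apply: (allP hgm); apply: mem_nth; rewrite hsm.
case: (s =P i) => [esi|nsi].
  subst s.
  case: (nth 0 e i =P 0%N) => [e0|en0].
    by rewrite mmonom_args_eq //; lia.
  have hodd : odd (nth 0 e i).
    move: hsb en0; rewrite /= /goodn negb_and negbK.
    by case/orP => // h; case: (nth 0 e i) h => [|[|x]].
  have heven : ~~ odd (nth 0 e (r - j)%N) by have := hfront (r - j)%N (leqnn _); case/andP.
  set c := fun k : nat => (nat_of_bool (k == i.-1) + nat_of_bool (k == i))%N.
  have hc : c i.-1 = c i by rewrite /c; lia.
  have wm : wt r c m = (nth 0 m i.-1 + nth 0 m i)%N.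
    by apply: sum_delta2 => //; try lia.
  have wne : forall o, (o == i) || (o == i.+1) ->
      wt r c m != (\sum_(k < r) lam r j o c i k * nth 0 e k)%N.
    move=> o ho; rewrite wm (@sum_delta2 r _ (r - j)%N i); try lia.
      apply/eqP => h; have := congr1 odd h; rewrite !oddD.
      have := mgood i.-1 ltac:(lia); have := mgood i hir; rewrite /goodn.
      by case/andP => /negPf -> _ /andP [/negPf -> _]; rewrite (negPf heven) hodd.
    move=> k hk; rewrite /lam /c; case/orP: ho => /eqP ->; do ! case: ifP => ?; lia.
  have hA := @homw_mmonom_args r j i i.+1 c e hjr ltac:(lia) ltac:(lia) hir hc.
  have hB := @homw_mmonom_args r j i i c e hjr ltac:(lia) ltac:(lia) hir hc.
  rewrite (mcoef_hom_zero hA (wne i.+1 _)); last by rewrite eqxx orbT.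
  by rewrite (mcoef_hom_zero hB (wne i _)) // eqxx.
set u := if (s < i)%N then s.-1 else s.
set c := fun k : nat => nat_of_bool (k == u).
have hu : (u < r)%N by rewrite /u; case: ifP => _; lia.
have hc : c i.-1 = c i by rewrite /c /u; case: ifP => ?; lia.
have wne : forall o, (o == i) || (o == i.+1) ->
    wt r c m != (\sum_(k < r) lam r j o c i k * nth 0 e k)%N.
  move=> o ho; rewrite wt_delta // (@sum_delta r _ s); try lia.
    apply/eqP => h; move: hsb => /= /negP; apply; rewrite -h; exact: mgood.
  move=> k hk; rewrite /lam /c /u; case/orP: ho => /eqP ->; do ! case: ifP => ?; lia.
have hA := @homw_mmonom_args r j i i.+1 c e hjr ltac:(lia) ltac:(lia) hir hc.
have hB := @homw_mmonom_args r j i i c e hjr ltac:(lia) ltac:(lia) hir hc.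
rewrite (mcoef_hom_zero hA (wne i.+1 _)); last by rewrite eqxx orbT.
by rewrite (mcoef_hom_zero hB (wne i _)) // eqxx.
Qed.

End Part9.
Import Part9.

Module Part10.
Local Open Scope ring_scope.

Fixpoint Dcomp (r k : nat) (X : mpoly) : mpoly :=
  match k with
  | 0 => X
  | k'.+1 => Dform r k'.+2 (Dcomp r k' X)
  end.

Lemma mem_Dform r j X t : t \in Dform r j X ->
  t \in X \/ exists i o, [/\ i \in iota (r - j + 1) (j - 1), (o == i) || (o == i.+1) &
        exists2 t0, t0 \in X & t.2 \in map snd (mmonom r (phi_args r j i o) t0.2)].
Proof.
rewrite /Dform /madd mem_cat => /orP [h|]; first by left.
move/flattenP => [l /mapP [i hi ->]]; rewrite /msub /madd /mopp mem_cat => /orP [] h; right.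
- exists i, i.+1; split => //; first by rewrite eqxx orbT.
  move: h => /flattenP [l' /mapP [t0 ht0 ->]] /mapP [t1 ht1 ->] /=.
  by exists t0 => //; apply/mapP; exists t1.
- exists i, i; split => //; first by rewrite eqxx.
  move: h => /mapP [t2 + ->] => /flattenP [l' /mapP [t0 ht0 ->]] /mapP [t1 ht1 ->] /=.
  by exists t0 => //; apply/mapP; exists t1.
Qed.

Lemma homw_terms r c v p e : homw r c v p -> e \in map snd p -> size e = r /\ wt r c e = v.
Proof.
by move=> /allP h /mapP [t ht ->]; have /andP [/eqP -> /eqP ->] := h t ht.
Qed.

Lemma lam_delta r j o i u k : (u < r - j)%N -> (r - j < i)%N -> (r - j < o)%N -> (k < r)%N ->
  lam r j o (fun x => nat_of_bool (x == u)) i k = nat_of_bool (k == u).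
Proof. move=> *; rewrite /lam; do ! case: ifP => ?; lia. Qed.

Lemma lam_one r j o i k : lam r j o (fun _ => 1%N) i k = 1%N.
Proof. by rewrite /lam; do ! case: ifP. Qed.

Lemma Dform_front r j X B : (1 <= j <= r)%N -> (B <= r - j)%N ->
  (forall t, t \in X -> size t.2 = r /\ forall u, (u < B)%N -> goodn (nth 0 t.2 u)) ->
  forall t, t \in Dform r j X -> size t.2 = r /\ forall u, (u < B)%N -> goodn (nth 0 t.2 u).
Proof.
move=> /andP [hj1 hjr] hB hX t /mem_Dform [/hX //|[i [o [hi ho [t0 ht0 hm]]]]].
move: hi; rewrite mem_iota => /andP [hi1 hi2].
have [hs0 hg0] := hX t0 ht0.
split.
  have hh := @homw_mmonom_args r j i o (fun _ => 1%N) t0.2 hjr ltac:(lia) ltac:(lia) ltac:(lia) erefl.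
  by case: (homw_terms hh hm).
move=> u hu.
set c := fun x : nat => nat_of_bool (x == u).
have hc : c i.-1 = c i by rewrite /c; lia.
have hh := @homw_mmonom_args r j i o c t0.2 hjr ltac:(lia) ltac:(lia) ltac:(lia) hc.
have [hs hw] := homw_terms hh hm.
rewrite wt_delta in hw; last by lia.
rewrite hw (@sum_delta r _ u) ?hg0 //; first by lia.
move=> k hk; apply: lam_delta; lia.
Qed.

Lemma Dform_deg r j X d : (1 <= j <= r)%N ->
  (forall t, t \in X -> size t.2 = r /\ wt r (fun _ => 1%N) t.2 = d) ->
  forall t, t \in Dform r j X -> size t.2 = r /\ wt r (fun _ => 1%N) t.2 = d.
Proof.
move=> /andP [hj1 hjr] hX t /mem_Dform [/hX //|[i [o [hi ho [t0 ht0 hm]]]]].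
move: hi; rewrite mem_iota => /andP [hi1 hi2].
have [hs0 hw0] := hX t0 ht0.
have hh := @homw_mmonom_args r j i o (fun _ => 1%N) t0.2 hjr ltac:(lia) ltac:(lia) ltac:(lia) erefl.
have [hs hw] := homw_terms hh hm; split => //; rewrite hw -hw0.
by apply: eq_bigr => k _; rewrite lam_one.
Qed.

Lemma meq_phiComp r k P Q : meq P Q -> meq (phiComp r k P) (phiComp r k Q).
Proof.
move=> h; elim: k => [|k IH] //=.
by rewrite !phiE; apply/meq_rte/meq_Dform.
Qed.

Lemma chain r P0 k : (k <= r - 2)%N -> (forall t, t \in P0 -> GoodM r t.2) ->
  meq (phiComp r k P0) (rte r (Dcomp r k P0)) /\
  (forall t, t \in Dcomp r k P0 -> size t.2 = r /\ forall u, (u < r - k - 1)%N -> goodn (nth 0 t.2 u)).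
Proof.
move=> hk hP0; elim: k hk => [|k IH] hk.
  split.
    move=> m; rewrite mcoef_rte /=; case: ifP => // hm.
    rewrite /mcoef big_seq_cond big1 // => t /andP [ht /eqP e].
    by move: hm; rewrite -e hP0.
  move=> t ht; have /andP [/eqP hs ha] := hP0 t ht; split => // u hu.
  by apply: (allP ha); apply: mem_nth; rewrite hs; lia.
have [IH1 IH2] := IH ltac:(lia).
split.
  rewrite /= phiE; apply: meq_trans (meq_rte _ (meq_Dform _ _ IH1)) _.
  apply: meq_sym; apply: rte_Dform_rte => t ht hb m hm.
  have [hs hf] := IH2 t ht.
  apply: Dcore => //; first by lia.
    by move=> u hu; apply: hf; lia.
  by move: hb; rewrite /GoodM hs eqxx.
move=> t ht; apply: (Dform_front (X := Dcomp r k P0) (j := k.+2)) => //; try lia.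
by move=> t0 ht0; have [hs hf] := IH2 t0 ht0; split => // u hu; apply: hf; lia.
Qed.

Lemma deg_chain r P0 k d : (k <= r - 2)%N ->
  (forall t, t \in P0 -> size t.2 = r /\ wt r (fun _ => 1%N) t.2 = d) ->
  forall t, t \in Dcomp r k P0 -> size t.2 = r /\ wt r (fun _ => 1%N) t.2 = d.
Proof.
move=> hk hP0; elim: k hk => [|k IH] hk //= t ht.
apply: (Dform_deg (X := Dcomp r k P0) (j := k.+2)) _ _ ht; first lia.
by move=> t0 ht0; apply: IH => //; lia.
Qed.

Lemma W_chain r P0 k : (k <= r - 3)%N -> Wsem (ev r P0) -> Wsem (ev r (Dcomp r k P0)).
Proof.
move=> hk hW; elim: k hk => [|k IH] hk //=.
apply: Wsem_Dform; try lia; apply: IH; lia.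
Qed.

Lemma Dcomp_nil r k : meq (Dcomp r k [::]) mzero.
Proof.
elim: k => [|k IH] //= m.
by rewrite (@meq_Dform r k.+2 _ _ IH m) mcoef_Dform /mzero big_nil mcoef_nil.
Qed.

Lemma wt_one_sumn r m : size m = r -> wt r (fun _ => 1%N) m = sumn m.
Proof.
move=> <-; rewrite /wt; elim: m => [|a m IH] /=; first by rewrite big_ord0.
by rewrite big_ord_recl /= mul1n -IH.
Qed.

End Part10.
Import Part10.

Module Part11.
Local Open Scope ring_scope.

Definition normp (P : mpoly) : mpoly :=
  [seq (mcoef P m, m) | m <- [seq m <- undup (map snd P) | mcoef P m != 0]].

Lemma sum_pick (L : seq (seq nat)) (c : seq nat -> rat) m : uniq L ->
  \sum_(m' <- L | (c m' != 0) && (m' == m)) c m' = if m \in L then c m else 0.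
Proof.
move=> uL.
have -> : \sum_(m' <- L | (c m' != 0) && (m' == m)) c m' = \sum_(m' <- L | m' == m) c m'.
  rewrite big_mkcond [RHS]big_mkcond; apply: eq_bigr => x _.
  by case: (x == m); rewrite ?andbT ?andbF //; case: eqP.
case: ifP => hm.
  rewrite big_mkcond (bigD1_seq m) //= eqxx big1 ?addr0 // => x /negPf ->.
  done.
by rewrite big_seq_cond big1 // => x /andP [hx /eqP e]; move: hm; rewrite -e hx.
Qed.

Lemma normp_meq P : meq P (normp P).
Proof.
move=> m; rewrite [RHS]/mcoef /normp big_map big_filter_cond /=.
rewrite (sum_pick (mcoef P) m (undup_uniq _)) mem_undup.
case: ifP => // hm.
rewrite /mcoef big_seq_cond big1 // => t /andP [ht /eqP e].
by move: hm; rewrite -e (map_f snd ht).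
Qed.

Lemma normp_terms N r P : inV N r P -> forall t, t \in normp P -> inS N r t.2.
Proof.
move=> hV t /mapP [m]; rewrite mem_filter => /andP [hc _] -> /=.
exact: hV.
Qed.


End Part11.
Import Part11.

Theorem lemma4p11 (N r : nat) (hN : (1 <= N)%N) (hr : (3 <= r)%N) :
  forall Q : mpoly, inImW N r Q -> inKer N r r Q /\ inImV N r Q.
Proof.
move=> Q [P [hW hQ]].
have hV := hW.1.
set P0 := normp P.
have hPP0 : meq P P0 := normp_meq P.
have hS := normp_terms hV.
have hG : forall t, t \in P0 -> GoodM r t.2.
  by move=> t ht; have /and3P [h1 h2 _] := hS t ht; rewrite /GoodM h1.
have hQ0 : meq Q (phiComp r (r - 2) P0) := meq_trans hQ (meq_phiComp r (r - 2) hPP0).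
have [hc1 hc2] := chain (k := (r - 2)%N) (leqnn _) hG.
have hQD : meq Q (rte r (Dcomp r (r - 2) P0)) := meq_trans hQ0 hc1.
split; last by exists P.
split.
- move=> m hm.
  have hm' := hm; rewrite hQD mcoef_rte in hm'.
  move: hm'; case: ifP => hgm; last by rewrite eqxx.
  move=> hcm.
  have : has (fun t => t.2 == m) (Dcomp r (r - 2) P0).
    case: (boolP (has _ _)) => // /hasPn hn.
    move: hcm; rewrite /mcoef big_seq_cond big1 ?eqxx // => t /andP [ht he].
    by move: (hn t ht); rewrite /= he.
  move=> /hasP [t ht /eqP htm].
  case: (P0 =P [::]) => [hnil|hne].
    by move: hcm; rewrite hnil (Dcomp_nil r (r - 2) m) /mzero mcoef_nil eqxx.
  have [t0 ht0] : exists t0, t0 \in P0.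
    by case: (P0) hne => [|x l] // _; exists x; rewrite inE eqxx.
  have /and3P [hs0 _ /eqP hd0] := hS t0 ht0.
  have hdeg : forall t, t \in P0 -> size t.2 = r /\ wt r (fun _ => 1%N) t.2 = (N - r)%N.
    move=> t1 ht1; have /and3P [/eqP hs1 _ /eqP hd1] := hS t1 ht1.
    by split => //; rewrite wt_one_sumn //; lia.
  have [hst hwt] := deg_chain (leqnn _) hdeg ht.
  move: hgm; rewrite /GoodM => /andP [hsm hgm].
  rewrite /inS hsm /=; apply/andP; split; first exact: hgm.
  rewrite -htm -(wt_one_sumn hst) hwt; apply/eqP; lia.
- have hWP0 : Wsem (ev r P0).
    apply: (Wsem_ext (f := ev r P)); first by move=> w; apply: ev_meq.
    by apply: (Wsem_of_inW (N := N)); [lia | exact: hW].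
  have hZW := @W_chain r P0 (r - 3) (leqnn _) hWP0.
  have [_ hZ2] := @chain r P0 (r - 3)%N ltac:(lia) hG.
  have hZs : sized r (Dcomp r (r - 3) P0).
    by apply/allP => t ht; have [-> _] := hZ2 t ht.
  have hDD := @DD_zero r _ ltac:(lia) hZs hZW.
  rewrite phiE.
  apply: meq_trans (meq_rte _ (meq_Dform _ _ hQD)) _.
  apply: meq_trans (meq_sym (rte_Dform_rte _)) _.
    move=> t ht hb m hm.
    have [hs hf] := hc2 t ht.
    apply: Dcore => //; first by lia.
      by move=> u hu; apply: hf; lia.
    by move: hb; rewrite /GoodM hs eqxx.
  have -> : (r - 2 = (r - 3).+1)%N by lia.
  rewrite /=.
  have -> : ((r - 3).+2 = r - 1)%N by lia.
  move=> m; rewrite (meq_rte r hDD m) mcoef_rte /mzero mcoef_nil.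
  by case: ifP.
Qed.
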